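(* Let $(F_n)_{n\ge1}$ be the Fibonacci sequence ($F_1=F_2=1$, $F_{n+2}=F_{n+1}+F_n$). For a positive integer $n$ let $g(n):=\gcd(n,F_n)$, let $z(n)$ be the smallest positive integer $k$ such that $n\mid F_k$, and let $\ell(n):=\operatorname{lcm}(n,z(n))$. Let $\mathcal{A}:=\{g(n): n\ge1\}$. Then for all positive integers $m,n$ and all primes $p$: (i) if $m\mid n$ then $g(m)\mid g(n)$; (ii) $n\mid g(m)$ if and only if $\ell(n)\mid m$; (iii) $n\in\mathcal{A}$ if and only if $n=g(\ell(n))$; (iv) if $\ell(p)\mid \ell(n)$ and $n\in\mathcal{A}$, then $p\mid n$; (v) $\ell(p)=p\,z(p)$ if $p\ne 5$, and $\ell(5)=5$; (vi) if $p\neq 3$ and $\ell(q)\nmid z(p)$ for all primes $q$, then $p\in\mathcal{A}$. *)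

(* Defs.v *)
From mathcomp Require Import all_boot.
From Stdlib Require Import ClassicalEpsilon.
Set Implicit Arguments. Unset Strict Implicit. Unset Printing Implicit Defensive.

Fixpoint fib (n : nat) : nat :=
  match n with
  | 0 => 0
  | S m => match m with 0 => 1 | S k => fib m + fib k end
  end.

Definition g (n : nat) : nat := gcdn n (fib n).

(* z(n) = least k > 0 with n | F_k (rank of apparition).  Such a k always
   exists for n >= 1 (a theorem); if it did not, we default to 0. *)
Definition z (n : nat) : nat :=
  match excluded_middle_informative (exists k, (0 < k) && (n %| fib k)) with
  | left H => ex_minn H
  | right _ => 0
  end.

Definition ell (n : nat) : nat := lcmn n (z n).

Definition inA (a : nat) : Prop := exists n, 0 < n /\ a = g n.

(* Main.v *)
Require Import Defs.
From mathcomp Require Import all_boot all_algebra all_field.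
Import GRing.Theory.
Local Open Scope ring_scope.
Lemma fibSS n : fib n.+2 = (fib n.+1 + fib n)%N. Proof. by []. Qed.
Arguments fib : simpl never.
Section S.
Variable p : nat.
Definition M : 'M['F_p]_2 := \matrix_(i, j) (if (i == 1 :> nat) && (j == 1 :> nat) then 0 else 1).
Lemma Mpow n : M ^+ n.+1 = \matrix_(i, j) (fib (n.+2 - i - j))%:R.
Proof.
elim: n => [|n IH].
  rewrite expr1; apply/matrixP => i j; rewrite !mxE.
  by case: i => [[|[|//]]] Hi; case: j => [[|[|//]]] Hj.
rewrite exprSr IH -mulmxE; apply/matrixP => i j; rewrite !mxE.
rewrite !big_ord_recl big_ord0 !mxE /=.
case: i => [[|[|//]]] Hi; case: j => [[|[|//]]] Hj /=;
  rewrite ?mulr1 ?mulr0 ?addr0 ?add0r //= -?natrD ?subn1 /= -?fibSS //.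
Qed.
End S.
From mathcomp Require Import ring.
Lemma apparition p : prime p -> p != 2%N -> p != 5%N -> (p %| fib p.-1)%N || (p %| fib p.+1)%N.
Proof.
move=> pp p2 p5.
have ch : p \in [pchar 'M['F_p]_2].
  rewrite inE pp /=; rewrite -(scaler_nat (R:='F_p)) pchar_Fp_0 // scale0r //.
have chF := pchar_Fp pp.
have oddp : odd p by case: (even_prime pp) => // E; rewrite E in p2.
set k := p./2.
have hp : p = k.*2.+1 by rewrite -[in LHS](odd_double_half p) oddp.
set S : 'M['F_p]_2 := M p *+ 2 - 1.
have S2 : S ^+ 2 = (5%:R : 'F_p) *: 1.
  apply/matrixP => i j; rewrite expr2 -mulmxE !mxE !big_ord_recl big_ord0 !mxE /=.
  case: i => [[|[|//]]] Hi; case: j => [[|[|//]]] Hj /=; ring.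
set e : 'F_p := 5%:R ^+ k.
have key : M p ^+ p *+ (2 ^ p) = 1 + e *: S.
  rewrite -exprMn_n.
  have -> : M p *+ 2 = 1 + S by rewrite /S addrC subrK.
  rewrite -(pFrobenius_autE ch) pFrobenius_autD_comm; last by rewrite /GRing.comm mul1r mulr1.
  rewrite pFrobenius_aut1 pFrobenius_autE; congr (_ + _).
  have Sp n : S ^+ (n.*2.+1) = 5%:R ^+ n *: S.
    by rewrite exprS -mul2n exprM S2 exprZn expr1n -scalerAr mulr1.
  by rewrite /e -Sp -hp.
have e2 : e ^+ 2 = 1.
  have n5 : (5%:R : 'F_p) != 0 by rewrite -(dvdn_pcharf chF) dvdn_prime2.
  apply: (mulIf n5); rewrite mul1r /e -exprM mulnC mul2n -exprSr -hp.
  by have := expf_card (5%:R : 'F_p); rewrite card_Fp.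
have n2 : (2%:R ^+ p : 'F_p) != 0 by rewrite expf_neq0 // -(dvdn_pcharf chF) dvdn_prime2.
have H00 := congr1 (fun A : 'M_2 => A ord0 ord0) key.
have H11 := congr1 (fun A : 'M_2 => A (lift ord0 ord0) (lift ord0 ord0)) key.
have Mp : M p ^+ p = \matrix_(i, j) (fib (p.+1 - i - j))%:R.
  by have := Mpow p k.*2; rewrite -hp.
move: H00 H11 => /=; rewrite !mulmxnE Mp !mxE /=.
have b1 : bump 0 0 = 1%N by [].
rewrite !subn0 b1 !subn1 succnK.
move=> H0 H1.
have := e2; move/eqP; rewrite sqrf_eq1 => /orP[/eqP E|/eqP E].
  have H : (fib p.-1)%:R * (2 ^ p)%:R = 0 :> 'F_p by rewrite mulr_natr H1 E; ring.
  move/eqP: H; rewrite natrX mulf_eq0 (negbTE n2) orbF -(dvdn_pcharf chF) => ->//.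
have H : (fib p.+1)%:R * (2 ^ p)%:R = 0 :> 'F_p by rewrite mulr_natr H0 E; ring.
move/eqP: H; rewrite natrX mulf_eq0 (negbTE n2) orbF -(dvdn_pcharf chF) => ->; by rewrite orbT.
Qed.
From mathcomp Require Import zify.
From Stdlib Require Import ClassicalEpsilon.
Local Open Scope nat_scope.

Lemma fibD m n : fib (m + n.+1) = fib m.+1 * fib n.+1 + fib m * fib n.
Proof.
elim: m n => [|m IH] n; first by rewrite add0n mul1n mul0n addn0.
rewrite addSnnS IH !fibSS !mulnDl !mulnDr; lia.
Qed.

Lemma fib_coprime n : coprime (fib n) (fib n.+1).
Proof.
elim: n => [|n IH]; first by [].
by rewrite /coprime fibSS gcdnDl gcdnC.
Qed.

Lemma fib_dvdM a b : fib a %| fib (a * b).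
Proof.
elim: b => [|b IH]; first by rewrite muln0 dvdn0.
case: a IH => [|a] IH; first by rewrite mul0n.
rewrite mulnS addnC fibD.
by apply: dvdn_add; [apply: dvdn_mull | apply: dvdn_mulr].
Qed.

Lemma fib_dvd a b : a %| b -> fib a %| fib b.
Proof. by move/dvdnP=> [q ->]; rewrite mulnC fib_dvdM. Qed.

Lemma back n i d : fib i = fib (i + d) %[mod n] -> fib i.+1 = fib (i + d).+1 %[mod n] -> n %| fib d.
Proof.
elim: i => [|i IH] H1 H2.
  by move: H1; rewrite add0n /dvdn => <-; rewrite mod0n.
rewrite addSn in H1 H2; rewrite !fibSS in H2.
apply: IH => //.
apply/eqP; rewrite -(eqn_modDl (fib (i + d).+1)) -modnDml -H1 modnDml; exact/eqP.
Qed.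

Lemma fib_exists n : 0 < n -> exists k, (0 < k) && (n %| fib k).
Proof.
move=> n0.
pose f := fun i : 'I_(n * n).+1 => (Ordinal (ltn_pmod (fib i) n0), Ordinal (ltn_pmod (fib i.+1) n0)).
have : ~~ injectiveb f.
  apply/negP => /injectiveP inj.
  have := leq_card _ inj; rewrite card_prod !card_ord; lia.
move/injectivePn => [i [j ij eq]].
have [E1 E2] : fib i = fib j %[mod n] /\ fib i.+1 = fib j.+1 %[mod n].
  by move: eq; rewrite /f => -[-> ->].
clear eq f; wlog lt : i j ij E1 E2 / i < j.
  move=> W; case: (ltngtP i j) => [h|h|h]; first exact: W ij E1 E2 h.
    by apply: (W j i) => //; rewrite eq_sym.
  by move: ij; rewrite (val_inj h) eqxx.
exists (j - i); rewrite subn_gt0 lt /=.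
apply: (@back n i); rewrite subnKC ?(ltnW lt) //.
Qed.

Lemma zP n : 0 < n ->
  [/\ 0 < z n, n %| fib (z n) & forall k, 0 < k -> n %| fib k -> z n <= k].
Proof.
move=> n0; rewrite /z.
case: excluded_middle_informative => [H|H]; last by exfalso; apply: H; apply: fib_exists.
case: ex_minnP => m /andP[m0 dm] mn; split => // k k0 dk; by apply: mn; rewrite k0 dk.
Qed.

Lemma z_dvd n k : 0 < n -> (n %| fib k) = (z n %| k).
Proof.
move=> n0; have [z0 dz zmin] := zP n n0.
apply/idP/idP; last by move=> H; apply: dvdn_trans dz (fib_dvd _ _ H).
rewrite {1}(divn_eq k (z n)) => dk.
have Hr : k %% z n < z n by rewrite ltn_pmod.
move: dk Hr; rewrite /dvdn; case: (k %% z n) => [|r] //.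
rewrite fibD => dk Hr; exfalso.
have d1 : n %| fib (k %/ z n * z n) by apply: dvdn_trans dz _; rewrite mulnC fib_dvdM.
have cop : coprime n (fib (k %/ z n * z n).+1) by apply: coprime_dvdl d1 (fib_coprime _).
have : n %| fib r.+1.
  rewrite -(Gauss_dvdr _ cop) -(dvdn_addl _ (dvdn_mulr (fib r) d1)); exact: dk.
by move/(zmin _ (ltn0Sn _)); rewrite leqNgt Hr.
Qed.

Lemma z_pos n : 0 < n -> 0 < z n.
Proof. by case/zP. Qed.

Lemma z_prime_bound q : prime q -> (q != 5 -> ~~ (q %| z q)) /\ z q <= q.+1.
Proof.
move=> pq; have q0 := prime_gt0 pq; have zq0 := z_pos q q0.
have [q2|q2] := eqVneq q 2.
  have : z q %| 3 by rewrite -z_dvd // q2.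
  rewrite q2 => h; split; last exact: dvdn_leq _ h.
  by move=> _; apply/negP => h2; have := dvdn_trans h2 h.
have [q5|q5] := eqVneq q 5.
  have : z q %| 5 by rewrite -z_dvd // q5.
  by move=> h; split => //; apply: leq_trans (dvdn_leq _ h) _; rewrite ?q5.
have q1 : 1 < q by apply: prime_gt1.
have := apparition q pq q2 q5; rewrite !z_dvd // => /orP[h|h].
  split; last by apply: (leq_trans (dvdn_leq _ h)); lia.
  move=> _; apply/negP => h2; have := dvdn_leq _ (dvdn_trans h2 h); lia.
split; last by apply: dvdn_leq.
move=> _; apply/negP => h2; have := dvdn_trans h2 h.
by rewrite -addn1 dvdn_addr // dvdn1 => /eqP h3; rewrite h3 in q1.
Qed.

Lemma part_i m n : m %| n -> g m %| g n.
Proof.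
move=> mn; rewrite /g dvdn_gcd; apply/andP; split.
  exact: dvdn_trans (dvdn_gcdl _ _) mn.
exact: dvdn_trans (dvdn_gcdr _ _) (fib_dvd _ _ mn).
Qed.

Lemma part_ii m n : 0 < n -> (n %| g m) = (ell n %| m).
Proof. by move=> n0; rewrite /g /ell dvdn_gcd dvdn_lcm z_dvd. Qed.

Lemma ell_pos n : 0 < n -> 0 < ell n.
Proof. by move=> n0; rewrite /ell lcmn_gt0 n0 z_pos. Qed.

Lemma part_iii n : 0 < n -> inA n <-> n = g (ell n).
Proof.
move=> n0; split; last by move=> E; exists (ell n); split => //; apply: ell_pos.
move=> [m [m0 E]]; apply/eqP; rewrite eqn_dvd; apply/andP; split.
  by rewrite part_ii.
have : ell n %| m by rewrite -part_ii // -E.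
by move/part_i; rewrite -E.
Qed.

Lemma coprime_pz p : prime p -> p != 5 -> coprime p (z p).
Proof. by move=> pp p5; rewrite prime_coprime //; case: (z_prime_bound p pp) => H _; apply: H. Qed.

Lemma ell_p p : prime p -> p != 5 -> ell p = p * z p.
Proof.
move=> pp p5; have := muln_lcm_gcd p (z p).
by have /eqP -> := coprime_pz p pp p5; rewrite muln1.
Qed.

Lemma ell5 : ell 5 = 5.
Proof.
have [z0 d5 zmin] := zP 5 isT.
have : z 5 <= 5 by apply: zmin.
rewrite /ell; move: z0 d5; case: (z 5) => [|[|[|[|[|[|k]]]]]] //.
Qed.

Lemma arith1 p q zq zp : 7 <= p -> p <= zq -> zq <= q.+1 -> q <= zp -> zp <= p.+1 ->
  q != p -> odd p -> prime q -> False.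
Proof.
move=> p7 l1 l2 l3 l4 /eqP qp oddp pq.
have hp := odd_double_half p; rewrite oddp in hp.
have hq := odd_double_half q.
case: (even_prime pq) => oq; first lia.
rewrite oq in hq; lia.
Qed.

Lemma part_vi p : prime p -> p != 3 -> (forall q, prime q -> ~~ (ell q %| z p)) -> inA p.
Proof.
move=> pp p3 H.
have [->|p2] := eqVneq p 2; first by exists 6.
have [->|p5] := eqVneq p 5; first by exists 5.
have p0 := prime_gt0 pp.
have oddp : odd p by case: (even_prime pp) => // E; rewrite E in p2.
have hp := odd_double_half p; rewrite oddp in hp.
have p7 : 7 <= p.
  have := prime_gt1 pp; move: p2 p3 p5 => /eqP ? /eqP ? /eqP ?; lia.
have [zp1 zp2] := z_prime_bound p pp.
have zp0 := z_pos p p0.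
set d := g (ell p).
have pd : p %| d by rewrite part_ii.
have d0 : 0 < d by rewrite /d /g gcdn_gt0 ell_pos.
have cop : coprime d (z p).
  apply/negPn/negP => nc.
  have r1 : 1 < gcdn d (z p).
    by move: nc; rewrite /coprime; have := gcdn_gt0 d (z p); rewrite d0 /=; lia.
  have pq := pdiv_prime r1.
  have qr := pdiv_dvd (gcdn d (z p)).
  set q := pdiv (gcdn d (z p)) in pq qr.
  have qd : q %| d := dvdn_trans qr (dvdn_gcdl _ _).
  have qz : q %| z p := dvdn_trans qr (dvdn_gcdr _ _).
  have qp : q != p.
    by apply/eqP => E; move: (zp1 p5); rewrite -{1}E qz.
  have lq : ell q %| ell p by rewrite -part_ii // prime_gt0.
  rewrite (ell_p p) // in lq.
  have zq : z q %| p * z p by apply: (dvdn_trans _ lq); rewrite /ell dvdn_lcmr.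
  have q0 := prime_gt0 pq.
  have [_ zq2] := z_prime_bound q pq.
  have zq0 := z_pos q q0.
  case: (boolP (p %| z q)) => pz.
    have l1 := dvdn_leq zq0 pz.
    have l2 := dvdn_leq zp0 qz.
    by exfalso; apply: (arith1 p q (z q) (z p)).
  have cq : coprime (z q) p by rewrite coprime_sym prime_coprime.
  rewrite Gauss_dvdr // in zq.
  by move: (H q pq); rewrite dvdn_lcm qz zq.
have dp : d %| p.
  have : d %| ell p by apply: dvdn_gcdl.
  by rewrite ell_p // Gauss_dvdl.
exists (ell p); split; first exact: ell_pos.
by apply/eqP; rewrite eqn_dvd pd dp.
Qed.

Theorem lemma2p2 :
  forall (m n p : nat), 0 < m -> 0 < n -> prime p ->
    (m %| n -> g m %| g n) /\
    (n %| g m <-> ell n %| m) /\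
    (inA n <-> n = g (ell n)) /\
    (ell p %| ell n -> inA n -> p %| n) /\
    ((p != 5 -> ell p = p * z p) /\ ell 5 = 5) /\
    (p != 3 -> (forall q, prime q -> ~~ (ell q %| z p)) -> inA p).
Proof.
move=> m n p m0 n0 pp.
split; first exact: part_i.
split; first by rewrite part_ii.
split; first exact: part_iii.
split.
  move=> lp /(part_iii n n0) E.
  have : p %| g (ell p) by rewrite part_ii ?prime_gt0.
  move/dvdn_trans; apply; rewrite E; exact: part_i.
split; first by split; [exact: ell_p | exact: ell5].
exact: part_vi.
Qed.
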